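(* Let $\Sigma$ be an oriented graph on $n$ vertices with skew adjacency matrix $S$ and walk-matrix $W=W(\Sigma)$ satisfying $\det W\neq0$, and let $P$ be a permutation matrix with $P^{\mathrm T}SP=S^{\mathrm T}=-S$. If $n$ is even, then $\mathrm{rank}(I-P)=\mathrm{rank}(I+P)=n/2$; if $n$ is odd, then $\mathrm{rank}(I-P)=(n-1)/2$ and $\mathrm{rank}(I+P)=(n+1)/2$, where ranks are over $\mathbb{Q}$. The same equalities hold for ranks over $\mathbb{F}_p$ for every odd prime $p$.
   Context: The skew adjacency matrix $S=(S_{ij})$ of an oriented graph on vertices $v_1,\dots,v_n$ has $S_{ij}=1$ if $(v_i,v_j)$ is a directed edge, $S_{ij}=-1$ if $(v_j,v_i)$ is a directed edge, and $S_{ij}=0$ otherwise. The walk-matrix is $W(\Sigma)=[e,Se,\ldots,S^{n-1}e]$ with $e$ the all-ones vector. *)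

(* Defs.v *)
From HB Require Import structures.
From mathcomp Require Import all_boot all_order all_algebra all_fingroup.
Set Implicit Arguments. Unset Strict Implicit. Unset Printing Implicit Defensive.
Import GRing.Theory Num.Theory.
Local Open Scope ring_scope.

(* An oriented graph on vertices 'I_n: a relation e with no pair of opposite arcs
   (in particular no loops); e i j means (v_i, v_j) is a directed edge. *)
Definition oriented_graph (n : nat) (e : rel 'I_n) : Prop :=
  forall i j, e i j -> ~~ e j i.

Definition skew_adj (n : nat) (e : rel 'I_n) : 'M[int]_n :=
  \matrix_(i, j) ((e i j)%:Z - (e j i)%:Z).

(* Walk matrix W = [e, S e, ..., S^(n-1) e]: column j is S^j times the all-ones vector. *)
Definition walk_mx (R : pzRingType) (n : nat) (S : 'M[R]_n) : 'M[R]_n :=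
  \matrix_(i, j) ((S ^+ j) *m (const_mx 1 : 'cV[R]_n)) i 0.

(* Main.v *)
Require Import Defs.
From HB Require Import structures.
From mathcomp Require Import all_boot all_order all_algebra all_fingroup.
From mathcomp Require Import zify.
Import GRing.Theory Num.Theory.
Local Open Scope ring_scope.
Lemma key (R : comNzRingType) n (S : 'M[R]_n) (s : 'S_n) :
  (perm_mx s)^T *m S *m perm_mx s = - S ->
  (perm_mx s)^T *m walk_mx S = walk_mx S *m diag_mx (\row_(j < n) (-1) ^+ (j:nat)).
Proof.
set P := perm_mx s => H.
have PPt : P *m P^T = 1%:M by rewrite /P tr_perm_mx -perm_mxM mulgV perm_mx1.
have h1 : P^T *m S = - (S *m P^T).
  by rewrite -[P^T *m S]mulmx1 -PPt !mulmxA H mulNmx.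
have hk : forall k, P^T *m S ^+ k = (-1) ^+ k *: (S ^+ k *m P^T).
  elim=> [|k IH]; first by rewrite !expr0 scale1r mulmx1 mul1mx.
  rewrite exprSr -mulmxE mulmxA IH -scalemxAl -mulmxA h1 mulmxN exprSr.
  by rewrite mulrN1 scaleNr -mulmxA scalerN.
have hc : P^T *m (const_mx 1 : 'cV[R]_n) = const_mx 1.
  by rewrite /P tr_perm_mx -row_permE; apply/matrixP => i j; rewrite !mxE.
have hcol : forall j, col j (walk_mx S) = S ^+ j *m const_mx 1.
  by move=> j; apply/matrixP => i k; rewrite !mxE ord1.
rewrite mul_mx_diag; apply/matrixP => i j.
have -> : (P^T *m walk_mx S) i j = (P^T *m (S ^+ j *m (const_mx 1 : 'cV[R]_n))) i 0.
  by rewrite -hcol colE mulmxA -colE [RHS]mxE.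
rewrite [RHS]mxE [walk_mx S i j]mxE [(\row__ _) 0 j]mxE.
rewrite mulmxA hk -scalemxAl -mulmxA hc mxE mulrC.
by [].
Qed.
Lemma rank11 (F : fieldType) (A : 'M[F]_1) : \rank A = (A 0 0 != 0).
Proof.
have [Hz|nz] := eqVneq (A 0 0) 0.
  have -> : A = 0 by apply/matrixP => i j; rewrite !ord1 mxE.
  by rewrite mxrank0.
have U : A \in unitmx by rewrite unitmxE det_mx11 unitfE.
by rewrite (mxrank_unit U).
Qed.

Lemma rank_diag (F : fieldType) n (d : 'rV[F]_n) :
  \rank (diag_mx d) = (\sum_(i < n) (d ord0 i != 0%R))%N.
Proof.
elim: n d => [|n IH] d.
  by rewrite big_ord0 flatmx0 mxrank0.
have E : \rank (diag_mx d) = \rank (block_mx (diag_mx (lsubmx (d : 'rV_(1 + n)))) 0 0 (diag_mx (rsubmx (d : 'rV_(1 + n))))).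
  by rewrite -diag_mx_row hsubmxK.
rewrite E rank_diag_block_mx IH.
rewrite big_ord_recl rank11 !mxE eqxx mulr1n.
congr (_ + _)%N.
  by congr (_ != 0); congr (d 0 _); apply/val_inj.
apply: eq_bigr => i _; rewrite mxE; congr (d 0 _ != 0).
by apply/val_inj; rewrite /= /bump leq0n.
Qed.

Lemma sum_odd n : (\sum_(i < n) odd i)%N = n./2.
Proof.
elim: n => [|n IH]; first by rewrite big_ord0.
rewrite big_ord_recr /= IH.
by rewrite uphalf_half addnC.
Qed.
Lemma rank_sum (F : fieldType) n (P : 'M[F]_n) :
  P *m P = 1%:M -> (2%:R : F) != 0 ->
  (\rank (1%:M - P)%R + \rank (1%:M + P)%R)%N = n.
Proof.
move=> PP two; apply/eqP; rewrite eqn_leq; apply/andP; split.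
  have := mxrank_mul_min (1%:M - P) (1%:M + P).
  rewrite mulmxBl mulmxDr mulmxDr mul1mx mulmx1 PP.
  rewrite mul1mx.
  have -> : 1%:M + P - (P + 1%:M) = 0 :> 'M[F]_n by rewrite [P + _]addrC subrr.
  by rewrite mxrank0 leqn0 subn_eq0.
have := mxrank_add (1%:M - P) (1%:M + P).
rewrite addrCA subrK.
have -> : (1%:M + 1%:M : 'M[F]_n) = (2%:R : F)%:M.
  by apply/matrixP => i j; rewrite !mxE; case: (i == j); rewrite ?mulr1n ?mulr0n ?addr0.
rewrite mxrank_unit //.
by rewrite unitmxE det_scalar unitfE expf_neq0.
Qed.

Lemma rank_cmp (F K : fieldType) m n (A : 'M[int]_(m, n)) :
  injective (intr : int -> K) ->
  (\rank (map_mx (intr : int -> F) A) <= \rank (map_mx (intr : int -> K) A))%N.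
Proof.
move=> injK.
set AF := map_mx (intr : int -> F) A; set AK := map_mx (intr : int -> K) A.
set f := maxrankfun AF.
have fr := maxrowsub_free AF; rewrite -/f in fr.
have rkBt : row_full (rowsub f AF)^T by rewrite /row_full mxrank_tr.
set g := fullrankfun rkBt.
have U := fullrowsub_unit rkBt; rewrite -/g in U.
set Ci : 'M[int]_(\rank AF) := rowsub g (rowsub f A)^T.
have EF : rowsub g (rowsub f AF)^T = map_mx intr Ci by apply/matrixP => i j; rewrite !mxE.
have EK : rowsub g (rowsub f AK)^T = map_mx intr Ci by apply/matrixP => i j; rewrite !mxE.
have dz : \det Ci != 0.
  move: U; rewrite EF unitmxE det_map_mx unitfE; apply: contra => /eqP ->.
  by rewrite rmorph0.
have UK : rowsub g (rowsub f AK)^T \in unitmx.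
  rewrite EK unitmxE det_map_mx unitfE.
  by apply: contra dz => /eqP; rewrite -(rmorph0 (intr : int -> K)) => /injK ->.
rewrite -(mxrank_unit UK) rowsubE.
apply: leq_trans (mxrankM_maxr _ _) _.
by rewrite mxrank_tr rowsubE mxrankM_maxr.
Qed.

Lemma map_walk (aR rR : comNzRingType) (f : {rmorphism aR -> rR}) n (S : 'M[aR]_n) :
  walk_mx (map_mx f S) = map_mx f (walk_mx S).
Proof.
have hX : forall k, map_mx f (S ^+ k) = (map_mx f S) ^+ k.
  elim=> [|k IH]; first by rewrite !expr0 map_mx1.
  by rewrite !exprSr -!mulmxE map_mxM IH.
apply/matrixP => i j; rewrite !mxE.
rewrite -hX rmorph_sum; apply: eq_bigr => k _; by rewrite rmorphM !mxE rmorph1.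
Qed.

Lemma two_Fp p : prime p -> odd p -> (2%:R : 'F_p) != 0.
Proof.
move=> pp op; rewrite -(dvdn_pcharf (pchar_Fp pp)).
apply/negP => /dvdn_leq => /(_ isT); have := odd_prime_gt2 op pp.
by case: p {pp op} => [|[|[|]]].
Qed.

Lemma squeeze (a b h k n : nat) : (a + b = n)%N -> (a <= h)%N -> (b <= k)%N -> (h + k = n)%N ->
  a = h /\ b = k.
Proof. lia. Qed.

Theorem lemma2p11 (n : nat) (e : rel 'I_n) (s : 'S_n) :
  oriented_graph e ->
  \det (walk_mx (skew_adj e)) != 0 ->
  (perm_mx s)^T *m skew_adj e *m perm_mx s = (skew_adj e)^T ->
  (skew_adj e)^T = - skew_adj e ->
  let P : 'M[int]_n := perm_mx s in
  (* ranks over Q *)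
  (~~ odd n ->
     \rank (map_mx (intr : int -> rat) (1%:M - P)) = n./2 /\
     \rank (map_mx (intr : int -> rat) (1%:M + P)) = n./2) /\
  (odd n ->
     \rank (map_mx (intr : int -> rat) (1%:M - P)) = (n - 1)./2 /\
     \rank (map_mx (intr : int -> rat) (1%:M + P)) = (n + 1)./2) /\
  (* ranks over F_p, p an odd prime *)
  (forall p : nat, prime p -> odd p ->
    (~~ odd n ->
       \rank (map_mx (intr : int -> 'F_p) (1%:M - P)) = n./2 /\
       \rank (map_mx (intr : int -> 'F_p) (1%:M + P)) = n./2) /\
    (odd n ->
       \rank (map_mx (intr : int -> 'F_p) (1%:M - P)) = (n - 1)./2 /\
       \rank (map_mx (intr : int -> 'F_p) (1%:M + P)) = (n + 1)./2)).
Proof.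
move=> og hdet H HT P.
set S := skew_adj e.
set Sq := map_mx (intr : int -> rat) S.
have HQ : (perm_mx s)^T *m Sq *m perm_mx s = - Sq.
  rewrite HT in H; have := congr1 (map_mx (intr : int -> rat)) H.
  rewrite !map_mxM -map_trmx !map_perm_mx map_mxN => ->.
  by [].
have Wu : walk_mx Sq \in unitmx.
  by rewrite /Sq map_walk unitmxE det_map_mx unitfE intr_eq0.
set W := walk_mx Sq.
set D := diag_mx (\row_(j < n) (-1 : rat) ^+ (j:nat)).
have K : (perm_mx s)^T *m W = W *m D := @key _ _ _ _ HQ.
have Pt : (perm_mx s)^T = W *m D *m invmx W by rewrite -K mulmxK.
have DD : D *m D = 1%:M.
  rewrite mulmx_diag; apply/matrixP => i j; rewrite !mxE -signr_odd.
  by case: (odd i); rewrite ?expr1 ?expr0 ?mulrNN ?mulr1.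
have PPq : (perm_mx s : 'M[rat]_n) *m perm_mx s = 1%:M.
  apply: trmx_inj; rewrite trmx_mul Pt trmx1 !mulmxA mulmxKV //.
  by rewrite -(mulmxA W D D) DD mulmx1 mulmxV.
have rQ1 : \rank ((1%:M - perm_mx s)%R : 'M[rat]_n) = n./2.
  rewrite -mxrank_tr linearB /= trmx1 Pt.
  have -> : 1%:M - W *m D *m invmx W = W *m (1%:M - D) *m invmx W.
    by rewrite mulmxBr mulmxBl mulmx1 mulmxV.
  rewrite mxrankMfree ?row_free_unit ?unitmx_inv //.
  rewrite -mxrank_tr trmx_mul mxrankMfree ?row_free_unit ?unitmx_tr // mxrank_tr.
  have -> : 1%:M - D = diag_mx (\row_(j < n) (1 - (-1 : rat) ^+ (j:nat))).
    apply/matrixP => i j; rewrite !mxE.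
    by case: (i == j); rewrite ?mulr1n ?mulr0n ?subr0.
  rewrite rank_diag -sum_odd; apply: eq_bigr => j _; rewrite mxE -signr_odd.
  by case: (odd j).
have twoQ : (2%:R : rat) != 0 by [].
have sQ := @rank_sum _ _ _ PPq twoQ.
have PPi : P *m P = 1%:M.
  apply/matrixP => i j; apply: (@intr_inj rat).
  have := congr1 (fun M : 'M[rat]_n => M i j) PPq.
  by rewrite -(map_perm_mx (intr : int -> rat)) -map_mxM -(map_mx1 (intr : int -> rat)) !mxE.
have EmQ : map_mx (intr : int -> rat) (1%:M - P) = 1%:M - perm_mx s.
  by rewrite map_mxB map_mx1 map_perm_mx.
have EpQ : map_mx (intr : int -> rat) (1%:M + P) = 1%:M + perm_mx s.
  by rewrite map_mxD map_mx1 map_perm_mx.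
have arE : ~~ odd n -> (n - n./2 = n./2)%N.
  by move=> /even_halfK hn; rewrite -{1}hn -addnn addnK.
have arO1 : odd n -> ((n - 1)./2 = n./2)%N.
  by move=> /odd_halfK hn; rewrite subn1 -hn doubleK.
have arO2 : odd n -> (n - n./2 = (n + 1)./2)%N.
  move=> on; rewrite addn1 -uphalfE uphalf_half on.
  have := odd_double_half n; rewrite on -addnn /=; move: (n./2) => h; lia.
have rQ2 : \rank ((1%:M + perm_mx s)%R : 'M[rat]_n) = (n - n./2)%N.
  by move: sQ; rewrite rQ1 => /(congr1 (subn^~ n./2)); rewrite addKn.
split; [|split].
- by move=> en; rewrite EmQ EpQ rQ1 rQ2 arE.
- by move=> on; rewrite EmQ EpQ rQ1 rQ2 arO1 // arO2.
move=> p pp op.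
have PPp : (perm_mx s : 'M['F_p]_n) *m perm_mx s = 1%:M.
  by rewrite -(map_perm_mx (intr : int -> 'F_p)) -map_mxM PPi map_mx1.
have sp := @rank_sum _ _ _ PPp (@two_Fp p pp op).
have Emp : map_mx (intr : int -> 'F_p) (1%:M - P) = 1%:M - perm_mx s.
  by rewrite map_mxB map_mx1 map_perm_mx.
have Epp : map_mx (intr : int -> 'F_p) (1%:M + P) = 1%:M + perm_mx s.
  by rewrite map_mxD map_mx1 map_perm_mx.
have le1 := @rank_cmp 'F_p rat _ _ (1%:M - P) (@intr_inj rat).
have le2 := @rank_cmp 'F_p rat _ _ (1%:M + P) (@intr_inj rat).
rewrite EmQ rQ1 in le1; rewrite EpQ rQ2 in le2; rewrite Emp Epp.
rewrite Emp in le1; rewrite Epp in le2.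
have hle : (n./2 <= n)%N by rewrite leq_half_double -addnn; lia.
have [r1 r2] := @squeeze _ _ _ _ _ sp le1 le2 (subnKC hle).
split.
- move=> en; split; first exact: r1.
  by rewrite -(arE en); exact: r2.
- move=> on; split; first by rewrite (arO1 on); exact: r1.
  by rewrite -(arO2 on); exact: r2.
Qed.
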